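(* Assume the rank-1 setting described in the context and Assumption 3. Let $\mathcal D$ be a (possibly random) collection of subsets of $V$ with $r^{1/3}\le|D|\le r$ for all $D\in\mathcal D$. Suppose that, under $\mathbb{P}_0$, \[ \frac{e(V)}{\mathbb{E}_0[e(V)]}\to1\quad\text{and}\quad\sup_{D\in\mathcal D}\Big|\frac{e(D,-D)}{\mathbb{E}_0[e(D,-D)]}-1\Big|\to0\quad\text{in probability}. \] Then \[ \sup_{D\in\mathcal D}\Big|\frac{\widehat E_D}{\mathbb{E}_0[e(D)]}-1\Big|\to0\quad\text{in }\mathbb{P}_0\text{-probability}. \] The same statement holds with $\mathbb{P}_0$ replaced by $\mathbb{P}_C$ in both hypothesis and conclusion, for any $C\subseteq V$ with $|C|=r$. The expectations $\mathbb{E}_0[\cdot]$ are kept as they are.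
   Context: Rank-1 setting. For each $n$ let $V=\{1,\dots,n\}$ with vertex weights $\theta_i\in(0,1)$ and edge probabilities $p_{ij}=\theta_i\theta_j$ ($i\ne j$). Let $r=r_n$ be a community size, and for each $C$ with $|C|=r$ let $\rho_C>1$ with $\rho_Cp_{ij}\le1$ for $i,j\in C$. A simple undirected random graph on $V$ has adjacency matrix $A$. Under $\mathbb{P}_0$ the $A_{ij}$ ($i<j$) are independent $\mathrm{Bern}(p_{ij})$. Under $\mathbb{P}_C$ they are independent with $A_{ij}\sim\mathrm{Bern}(\rho_Cp_{ij})$ for $i,j\in C$ and $\mathrm{Bern}(p_{ij})$ otherwise. $\mathbb{E}_0$ is the null expectation. All quantities may depend on $n$, and limits are as $n\to\infty$. Notation. $e(D)=\sum_{i<j,\ i,j\in D}A_{ij}$ and $e(D,-D)=\sum_{i\in D,j\notin D}A_{ij}$. $\widehat E_D=\tfrac14\big(\sqrt{e(V)}-\sqrt{e(V)-2e(D,-D)}\big)^2$. Assumption 3. $(\theta_{\max}/\theta_{\min})^2=o\big(r^{2/3}\wedge\frac nr\theta_{\min}^2\big)$, where $\theta_{\max}=\max_i\theta_i$ and $\theta_{\min}=\min_i\theta_i$. *)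

(* Defs.v *)
From HB Require Import structures.
From mathcomp Require Import all_boot all_order all_algebra.
From mathcomp Require Import all_classical all_reals all_analysis.
Set Implicit Arguments. Unset Strict Implicit. Unset Printing Implicit Defensive.
Import Order.TTheory GRing.Theory Num.Theory.
Local Open Scope classical_set_scope.
Local Open Scope ring_scope.

(* A simple graph on V = 'I_n is encoded by the states of the pairs (i,j);
   only the pairs with i < j are meaningful (A_{ij}, i<j); entries with
   i >= j are forced to be false by the probability measures below. *)
Definition graph (n : nat) := {ffun 'I_n * 'I_n -> bool}.

Definition adj n (g : graph n) (i j : 'I_n) : bool :=
  if (i < j)%N then g (i, j) else if (j < i)%N then g (j, i) else false.

Section Model.
Variable R : realType.

Definition weight n (q : 'I_n -> 'I_n -> R) (g : graph n) : R :=
  \prod_(ij : 'I_n * 'I_n)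
     (if (ij.1 < ij.2)%N then (if g ij then q ij.1 ij.2 else 1 - q ij.1 ij.2)
      else (if g ij then 0 else 1)).

Definition Prob n (q : 'I_n -> 'I_n -> R) (E : pred (graph n)) : R :=
  \sum_(g : graph n | E g) weight q g.

Definition Ex n (q : 'I_n -> 'I_n -> R) (X : graph n -> R) : R :=
  \sum_(g : graph n) weight q g * X g.

Definition p0 n (theta : 'I_n -> R) (i j : 'I_n) : R := theta i * theta j.

Definition pC n (theta : 'I_n -> R) (rho : R) (C : {set 'I_n}) (i j : 'I_n) : R :=
  if (i \in C) && (j \in C) then rho * (theta i * theta j) else theta i * theta j.

Definition eD n (g : graph n) (D : {set 'I_n}) : R :=
  \sum_(i in D) \sum_(j in D | (i < j)%N) (adj g i j)%:R.

Definition eDc n (g : graph n) (D : {set 'I_n}) : R :=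
  \sum_(i in D) \sum_(j in ~: D) (adj g i j)%:R.

Definition Ehat n (g : graph n) (D : {set 'I_n}) : R :=
  4^-1 * (Num.sqrt (eD g [set: 'I_n]) - Num.sqrt (eD g [set: 'I_n] - 2 * eDc g D)) ^+ 2.

Definition theta_max n (theta : 'I_n -> R) : R := \big[Num.max/0]_i theta i.
Definition theta_min n (theta : 'I_n -> R) : R := \big[Num.min/1]_i theta i.

Definition cvg_in_prob (q : forall n, 'I_n -> 'I_n -> R)
    (Y : forall n, graph n -> R) (c : R) : Prop :=
  forall eps : R, 0 < eps ->
    (fun n => Prob (q n) (fun g => eps < `|Y n g - c|)) @ \oo --> (0 : R^o).

(* sup over a finite (random) collection of nonnegative quantities *)
Definition supD n (Dcol : {set {set 'I_n}}) (f : {set 'I_n} -> R) : R :=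
  \big[Num.max/0]_(D in Dcol) f D.

End Model.

Arguments eD {R n} g D.
Arguments eDc {R n} g D.
Arguments Ehat {R n} g D.

(* Main.v *)
Require Import Defs.
From HB Require Import structures.
From mathcomp Require Import all_boot all_order all_algebra.
From mathcomp Require Import all_classical all_reals all_analysis.
From mathcomp Require Import ring lra.
Import Order.TTheory GRing.Theory Num.Theory.
Local Open Scope ring_scope.

Section Prob.
Variable R : realType.
Variable n : nat.
Variable q : 'I_n -> 'I_n -> R.
Hypothesis hq : forall i j : 'I_n, (i < j)%N -> 0 <= q i j <= 1.

Definition Fw (ij : 'I_n * 'I_n) (b : bool) : R :=
  if (ij.1 < ij.2)%N then (if b then q ij.1 ij.2 else 1 - q ij.1 ij.2)
  else (if b then 0 else 1).

Lemma Fw_ge0 ij b : 0 <= Fw ij b.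
Proof.
rewrite /Fw; case: ifP => h; case: b => //.
- by case/andP: (hq _ _ h).
- by case/andP: (hq _ _ h) => _ h1; rewrite subr_ge0.
Qed.

Lemma weight_ge0 (g : graph n) : 0 <= weight q g.
Proof. by apply: prodr_ge0 => ij _; exact: Fw_ge0. Qed.

Lemma Prob_ge0 E : 0 <= Prob q E.
Proof. by apply: sumr_ge0 => g _; exact: weight_ge0. Qed.

Lemma Prob_sub (E E1 E2 : pred (graph n)) :
  (forall g, E g -> E1 g || E2 g) -> Prob q E <= Prob q E1 + Prob q E2.
Proof.
move=> h; rewrite /Prob big_mkcond [X in _ <= X + _]big_mkcond [X in _ <= _ + X]big_mkcond -big_split /=.
apply: ler_sum => g _; have w0 := weight_ge0 g.
case: (boolP (E g)) => Eg; last by case: (E1 g); case: (E2 g); rewrite ?addr0 ?add0r ?addr_ge0.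
by move: (h g Eg); case: (E1 g); case: (E2 g) => //= _; rewrite ?addr0 ?add0r ?lerDl.
Qed.

Lemma Ex_sum (I : finType) (P : pred I) (f : I -> graph n -> R) :
  Ex q (fun g => \sum_(i | P i) f i g) = \sum_(i | P i) Ex q (f i).
Proof.
rewrite /Ex; under eq_bigr do rewrite mulr_sumr.
by rewrite exchange_big.
Qed.

Lemma Ex_edge (i0 : 'I_n * 'I_n) : (i0.1 < i0.2)%N ->
  Ex q (fun g => (g i0)%:R) = q i0.1 i0.2.
Proof.
move=> hi.
pose F' := fun ij (b : bool) => Fw ij b * (if ij == i0 then (b : nat)%:R else 1 : R).
have -> : Ex q (fun g => (g i0)%:R) = \sum_(g : {ffun _ -> bool}) \prod_ij F' ij (g ij).
  rewrite /Ex; apply: eq_bigr => g _; rewrite /F' big_split /=; congr (_ * _).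
  by rewrite (bigD1 i0) //= eqxx big1 ?mulr1 // => ij /negbTE ->.
rewrite -bigA_distr_bigA (bigD1 i0) //= [X in _ * X]big1 ?mulr1.
  by rewrite big_bool /F' /Fw /= hi eqxx mulr1 mulr0 addr0.
move=> ij /negbTE hij; rewrite big_bool /F' /Fw hij !mulr1.
by case: ifP => _ /=; rewrite ?add0r // addrC subrK.
Qed.

End Prob.

Section Exp.
Variable R : realType.
Variable n : nat.
Variable th : 'I_n -> R.
Hypothesis hth : forall i, 0 < th i < 1.

Lemma p0_01 (i j : 'I_n) : (i < j)%N -> 0 <= p0 th i j <= 1.
Proof.
move=> _; rewrite /p0; case/andP: (hth i) => a b; case/andP: (hth j) => c d.
apply/andP; split; first by rewrite mulr_ge0 // ltW.
by rewrite mulr_ile1 // ltW.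
Qed.

Lemma Ex_adj (i j : 'I_n) : i != j ->
  Ex (p0 th) (fun g => (adj g i j)%:R) = th i * th j.
Proof.
move=> hij; rewrite /adj.
case: (ltngtP i j) => h.
- by rewrite (@Ex_edge R n (p0 th) (i, j) h).
- by rewrite (@Ex_edge R n (p0 th) (j, i) h) //= /p0 mulrC.
- by move: hij; rewrite (val_inj h) eqxx.
Qed.

Lemma Ex_eD (D : {set 'I_n}) :
  Ex (p0 th) (fun g => eD (R:=R) g D) = \sum_(i in D) \sum_(j in D | (i < j)%N) th i * th j.
Proof.
rewrite /eD Ex_sum; apply: eq_bigr => i _; rewrite Ex_sum; apply: eq_bigr => j /andP [_ h].
by apply: Ex_adj; rewrite neq_ltn h.
Qed.

Lemma Ex_eDc (D : {set 'I_n}) :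
  Ex (p0 th) (fun g => eDc (R:=R) g D) = (\sum_(i in D) th i) * (\sum_(j in ~: D) th j).
Proof.
rewrite /eDc Ex_sum big_distrl; apply: eq_bigr => i hi; rewrite Ex_sum big_distrr.
apply: eq_bigr => j hj; apply: Ex_adj.
by apply: contraTneq hj => <-; rewrite inE hi.
Qed.

Lemma pairs_sum (D : {set 'I_n}) :
  2 * (\sum_(i in D) \sum_(j in D | (i < j)%N) th i * th j)
  = (\sum_(i in D) th i) ^+ 2 - \sum_(i in D) th i ^+ 2.
Proof.
have e1 : (\sum_(i in D) th i) ^+ 2 = \sum_(i in D) \sum_(j in D) th i * th j.
  by rewrite expr2 big_distrl; apply: eq_bigr => i _; rewrite big_distrr.
have e2 : forall i, i \in D -> \sum_(j in D) th i * th j =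
   \sum_(j in D | (i < j)%N) th i * th j + \sum_(j in D | (j < i)%N) th i * th j + th i ^+ 2.
  move=> i hi; rewrite (bigID (fun j : 'I_n => (i < j)%N)) /= -addrA; congr (_ + _).
  rewrite (bigD1 i) /=; last by rewrite hi ltnn.
  rewrite addrC expr2; congr (_ + _); apply: eq_bigl => j.
  rewrite -andbA; case: (j \in D) => //=.
  by rewrite -leqNgt ltn_neqAle andbC.
have e3 : \sum_(i in D) \sum_(j in D | (j < i)%N) th i * th j =
          \sum_(i in D) \sum_(j in D | (i < j)%N) th i * th j.
  rewrite (exchange_big_dep (fun j => j \in D)) /=.
  apply: eq_bigr => j hj; apply: eq_big => [i|i _]; last by rewrite mulrC.
  by rewrite hj.
  by move=> ? ? _ /andP[].
rewrite e1 (eq_bigr _ e2) !big_split /= e3; ring.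
Qed.

End Exp.

Section Core.
Variable R : realType.

Lemma rel_bound (u a d : R) : 0 < a -> `|u / a - 1| <= d -> (1 - d) * a <= u <= (1 + d) * a.
Proof.
move=> a0; have -> : u / a - 1 = (u - a) / a by rewrite mulrBl divff ?gt_eqF.
rewrite normrM normfV (gtr0_norm a0) ler_pdivrMr // ler_norml => /andP[h1 h2].
apply/andP; split; nra.
Qed.

Lemma rel_concl (E c e : R) : 0 < c -> (1 - e) * c <= E <= (1 + e) * c -> `|E / c - 1| <= e.
Proof.
move=> c0 /andP[h1 h2]; have -> : E / c - 1 = (E - c) / c by rewrite mulrBl divff ?gt_eqF.
rewrite normrM normfV (gtr0_norm c0) ler_pdivrMr // ler_norml; apply/andP; split; nra.
Qed.

Lemma sqrt_bounds (x y : R) : 0 <= x - 2 * y -> 0 <= y ->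
  let E := 4^-1 * (Num.sqrt x - Num.sqrt (x - 2 * y)) ^+ 2 in
  E * (4 * x - 6 * y) <= y ^+ 2 /\ y ^+ 2 <= E * (4 * x - 2 * y).
Proof.
move=> hz hy E.
have hx : 0 <= x by lra.
set p := Num.sqrt x; set s := Num.sqrt (x - 2 * y).
have p0 : 0 <= p by exact: sqrtr_ge0.
have s0 : 0 <= s by exact: sqrtr_ge0.
have pp : p ^+ 2 = x by rewrite sqr_sqrtr.
have ss : s ^+ 2 = x - 2 * y by rewrite sqr_sqrtr.
have sp : s <= p by rewrite ler_sqrt //; lra.
have ey : y = (p ^+ 2 - s ^+ 2) / 2 by rewrite pp ss; lra.
have eE0 : E = 4^-1 * (p - s) ^+ 2 by [].
have eE : y ^+ 2 = E * (p + s) ^+ 2 by rewrite eE0 ey; field.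
have E0 : 0 <= E by rewrite /E mulr_ge0 // ?sqr_ge0 // invr_ge0.
have h4 : 4 * x - 6 * y = p ^+ 2 + 3 * s ^+ 2 by rewrite ey -pp; field.
have h2 : 4 * x - 2 * y = 3 * p ^+ 2 + s ^+ 2 by rewrite ey -pp; field.
rewrite h4 h2 eE; split.
- apply: ler_wpM2l => //; nra.
- apply: ler_wpM2l => //; nra.
Qed.

End Core.

Arguments rel_bound {R u a d}.
Arguments rel_concl {R E c e}.
Arguments sqrt_bounds {R x y}.
Section Core2.
Variable R : realType.

Lemma polyP1 {d : R} : 0 <= d -> d <= 1/20 ->
  2 * (1 + d) ^+ 2 <= (1 + 20 * d) * (1 - d) * (2 - 10 * d - 4 * d ^+ 2).
Proof. move=> h0 h1; have h2 : 0 <= d * (1/20 - d) by nra. nra. Qed.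

Lemma polyP2 {d : R} : 0 <= d -> d <= 1/20 ->
  (1 - 20 * d) * (1 + d) <= (1 - d) ^+ 4.
Proof. move=> h0 h1; have h2 : 0 <= d * (1/20 - d) by nra. nra. Qed.

Lemma core (d x y S T Q QD a b c : R) :
  0 < d -> d <= 1/20 -> 0 < T -> 0 < S ->
  0 <= Q -> Q <= d * S ^+ 2 -> T <= d * S -> 0 <= QD -> QD <= d * T ^+ 2 ->
  2 * a = S ^+ 2 - Q -> b = T * (S - T) -> 2 * c = T ^+ 2 - QD ->
  `|x / a - 1| <= d -> `|y / b - 1| <= d ->
  `|4^-1 * (Num.sqrt x - Num.sqrt (x - 2 * y)) ^+ 2 / c - 1| <= 20 * d.
Proof.
move=> d0 d1 T0 S0 Q0 QS TS QD0 QDT ea eb ec hx hy.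
have S2 : 0 < S ^+ 2 by rewrite exprn_gt0.
have T2 : 0 < T ^+ 2 by rewrite exprn_gt0.
have dS : d * S <= S / 20 by nra.
have a0 : 0 < a by nra.
have b0 : 0 < b by rewrite eb; apply: mulr_gt0 => //; nra.
have c0 : 0 < c by nra.
case/andP: (rel_bound a0 hx) => x1 x2.
case/andP: (rel_bound b0 hy) => y1 y2.
have hx1 : (1 - d) ^+ 2 * S ^+ 2 <= 2 * x.
  have : (1 - d) * (2 * a) <= 2 * x by nra.
  have : (1 - d) * S ^+ 2 <= 2 * a by nra.
  nra.
have hx2 : 2 * x <= (1 + d) * S ^+ 2 by nra.
have TS0 : 0 < T * S by exact: mulr_gt0.
have hTS : T * S <= d * S ^+ 2 by rewrite expr2 mulrA; nra.
have hy1 : y <= (1 + d) * (T * S) by nra.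
have hy2 : (1 - d) ^+ 2 * (T * S) <= y.
  have : (1 - d) * (T * S) <= b by rewrite eb; nra.
  nra.
have yy0 : 0 <= y by nra.
have hpoly3 : 0 <= (1 - d) ^+ 2 / 2 - 2 * d * (1 + d) by nra.
have hz : 0 <= x - 2 * y.
  have : 2 * y <= 2 * (1 + d) * d * S ^+ 2 by nra.
  nra.
have [E1 E2] := sqrt_bounds hz yy0.
set E := 4^-1 * _ ^+ 2 in E1 E2 *.
have E0 : 0 <= E by rewrite /E mulr_ge0 // ?sqr_ge0 // invr_ge0.
apply: rel_concl => //; apply/andP; split.
-
  have ylo : (1 - d) ^+ 4 * (T ^+ 2 * S ^+ 2) <= y ^+ 2.
    have hA : 0 <= (1 - d) ^+ 2 * (T * S) by apply: mulr_ge0; [exact: sqr_ge0 | exact: ltW].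
    have h : (1 - d) ^+ 2 * (T * S) * ((1 - d) ^+ 2 * (T * S)) <= y * y by apply: ler_pM.
    nra.
  have eup : E * (4 * x - 2 * y) <= E * (2 * (1 + d) * S ^+ 2) by apply: ler_wpM2l => //; nra.
  have h3 : (1 - d) ^+ 4 * T ^+ 2 <= E * (2 * (1 + d)).
    have : (1 - d) ^+ 4 * T ^+ 2 * S ^+ 2 <= E * (2 * (1 + d)) * S ^+ 2 by nra.
    by rewrite ler_pM2r.
  have P2 := polyP2 (ltW d0) d1.
  have : (1 - 20 * d) * c <= (1 - 20 * d) * (T ^+ 2 / 2) by apply: ler_wpM2l; nra.
  have : (1 - 20 * d) * (1 + d) * T ^+ 2 <= (1 - d) ^+ 4 * T ^+ 2 by nra.
  nra.
-
  set L := 2 - 10 * d - 4 * d ^+ 2.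
  have L0 : 0 < L by rewrite /L; nra.
  have hlow : S ^+ 2 * L <= 4 * x - 6 * y.
    have : 6 * y <= 6 * (1 + d) * d * S ^+ 2 by nra.
    rewrite /L; nra.
  have h1 : E * (S ^+ 2 * L) <= (1 + d) ^+ 2 * (T ^+ 2 * S ^+ 2).
    have : E * (S ^+ 2 * L) <= E * (4 * x - 6 * y) by apply: ler_wpM2l.
    have : y ^+ 2 <= ((1 + d) * (T * S)) ^+ 2 by rewrite ler_sqr ?nnegrE //; nra.
    rewrite !exprMn; nra.
  have h2 : E * L <= (1 + d) ^+ 2 * T ^+ 2.
    have : E * L * S ^+ 2 <= (1 + d) ^+ 2 * T ^+ 2 * S ^+ 2 by nra.
    by rewrite ler_pM2r.
  have P1 := polyP1 (ltW d0) d1.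
  have hc : (1 - d) * T ^+ 2 <= 2 * c by nra.
  have : E * L <= (1 + 20 * d) * c * L.
    have : 2 * (1 + d) ^+ 2 * T ^+ 2 <= (1 + 20 * d) * (1 - d) * L * T ^+ 2 by rewrite /L; nra.
    have : (1 + 20 * d) * L * ((1 - d) * T ^+ 2) <= (1 + 20 * d) * L * (2 * c).
      apply: ler_wpM2l => //; apply: mulr_ge0; [nra | exact: ltW].
    nra.
  by rewrite ler_pM2r.
Qed.

End Core2.

Lemma mle_l (R : realType) (x y : R) : Num.min x y <= x.
Proof. by rewrite ge_min lexx. Qed.
Lemma mle_r (R : realType) (x y : R) : Num.min x y <= y.
Proof. by rewrite ge_min lexx orbT. Qed.

Section A3.
Variable R : realType.
Variable n : nat.
Variable th : 'I_n -> R.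
Hypothesis hth : forall i, 0 < th i < 1.

Lemma tmax_ge i : th i <= theta_max th.
Proof. exact: le_bigmax. Qed.

Lemma tmin_le i : theta_min th <= th i.
Proof. exact: bigmin_le. Qed.

Lemma tmin_gt0 : 0 < theta_min th.
Proof.
rewrite /theta_min; elim/big_ind: _ => //.
- by move=> u v hu hv; rewrite lt_min hu hv.
- by move=> i _; case/andP: (hth i).
Qed.

Lemma sum_lb (D : {set 'I_n}) : #|D|%:R * theta_min th <= \sum_(i in D) th i.
Proof.
rewrite -sum1_card natr_sum big_distrl /=; apply: ler_sum => i _; rewrite mul1r.
exact: tmin_le.
Qed.

Lemma sum_ub (D : {set 'I_n}) : \sum_(i in D) th i <= #|D|%:R * theta_max th.
Proof.
rewrite -sum1_card natr_sum big_distrl /=; apply: ler_sum => i _; rewrite mul1r.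
exact: tmax_ge.
Qed.

Lemma sq_ub (D : {set 'I_n}) : \sum_(i in D) th i ^+ 2 <= theta_max th * \sum_(i in D) th i.
Proof.
rewrite big_distrr /=; apply: ler_sum => i _; rewrite expr2; apply: ler_wpM2r.
  by case/andP: (hth i) => h _; exact: ltW.
exact: tmax_ge.
Qed.

Lemma sq_ge0 (D : {set 'I_n}) : 0 <= \sum_(i in D) th i ^+ 2.
Proof. by apply: sumr_ge0 => i _; exact: sqr_ge0. Qed.

Lemma A3_cons (r : nat) (eta : R) : (0 < n)%N -> 0 < eta -> eta <= 1 ->
  (theta_max th / theta_min th) ^+ 2
       <= eta ^+ 2 * Num.min ((r%:R : R) `^ (2 / 3))
                        ((n%:R / r%:R) * theta_min th ^+ 2) ->
  forall D : {set 'I_n}, (r%:R : R) `^ (3^-1) <= #|D|%:R -> (#|D| <= r)%N ->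
  [/\ 0 < \sum_(i in D) th i, 0 < \sum_i th i,
      \sum_i th i ^+ 2 <= eta * (\sum_i th i) ^+ 2,
      \sum_(i in D) th i <= eta * \sum_i th i &
      \sum_(i in D) th i ^+ 2 <= eta * (\sum_(i in D) th i) ^+ 2].
Proof.
move=> n0 e0 e1 H D hD1 hD2.
set tM := theta_max th; set tm := theta_min th.
have tm0 : 0 < tm := tmin_gt0.
have i0 : 'I_n := Ordinal n0.
have tMm : tm <= tM by apply: le_trans (tmin_le i0) (tmax_ge i0).
have tM0 : 0 < tM by apply: lt_le_trans tMm.
set rho := tM / tm.
have rho1 : 1 <= rho by rewrite /rho ler_pdivlMr // mul1r.
have erho : tM = rho * tm by rewrite /rho divfK // gt_eqF.
have Hm1 := le_trans H (ler_wpM2l (sqr_ge0 _) (mle_l _ _ _)).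
have Hm2 := le_trans H (ler_wpM2l (sqr_ge0 _) (mle_r _ _ _)).
have r0 : (0 < r)%N.
  case: r Hm2 {H Hm1 hD1 hD2} => // /=; rewrite invr0 mulr0 mul0r mulr0 => h.
  have : 0 < rho ^+ 2 by rewrite exprn_gt0 //; lra.
  by rewrite -/tM -/tm -/rho in h; move=> h'; exfalso; lra.
have rR : 0 < (r%:R : R) by rewrite ltr0n.
have nR : 0 < (n%:R : R) by rewrite ltr0n.
have hrn : rho * r%:R <= eta * n%:R.
  have h1 : rho ^+ 2 <= eta ^+ 2 * (n%:R / r%:R).
    apply: le_trans Hm2 _; rewrite mulrA; apply: ler_piMr.
      by rewrite mulr_ge0 ?sqr_ge0 // divr_ge0 // ltW.
    have : tm <= 1 by apply: le_trans (tmin_le i0) _; case/andP: (hth i0) => _ /ltW.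
    move=> h; rewrite expr2 mulr_ile1 //; exact: ltW.
  have h2 : rho * r%:R <= rho ^+ 2 * r%:R by rewrite ler_pM2r // expr2 ler_peMl //; lra.
  have h3 : rho ^+ 2 * r%:R <= eta ^+ 2 * n%:R.
    by move: h1; rewrite mulrA ler_pdivlMr.
  have : eta ^+ 2 * n%:R <= eta * n%:R by rewrite ler_pM2r // expr2 ger_pMl.
  lra.
have hrD : rho <= eta * #|D|%:R.
  have e23 : (r%:R : R) `^ (2 / 3) = (r%:R `^ (3^-1)) ^+ 2.
    by rewrite -powR_mulrn ?powR_ge0 // -powRrM mulrC.
  move: Hm1; rewrite e23 -exprMn => h.
  have hu : 0 <= eta * r%:R `^ (3^-1) by rewrite mulr_ge0 ?powR_ge0 // ltW.
  have : rho <= eta * r%:R `^ (3^-1) by rewrite -(ler_pXn2r (n:=2)) // ?nnegrE //; lra.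
  move=> h'; apply: le_trans h' _; rewrite ler_pM2l //.
have Dpos : (0 < #|D|)%N.
  rewrite lt0n; apply/negP => /eqP hD0; move: hD1; rewrite hD0.
  have : 0 < (r%:R : R) `^ (3^-1) by rewrite powR_gt0.
  move=> h1 h2; lra.
have DR : 0 < (#|D|%:R : R) by rewrite ltr0n.
have DrR : (#|D|%:R : R) <= r%:R by rewrite ler_nat.
have Tlb := sum_lb D; have Tub := sum_ub D; rewrite -/tm in Tlb; rewrite -/tM in Tub.
have Slb := sum_lb [set: 'I_n]; rewrite cardsT card_ord -/tm in Slb.
have ST : \sum_i th i = \sum_(i in [set: 'I_n]) th i by apply: eq_bigl => i; rewrite inE.
have SQ : \sum_i th i ^+ 2 = \sum_(i in [set: 'I_n]) th i ^+ 2 by apply: eq_bigl => i; rewrite inE.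
rewrite ST SQ.
set T := \sum_(i in D) th i in Tlb Tub *; set S := \sum_(i in [set: 'I_n]) th i in Slb *.
have T0 : 0 < T by apply: lt_le_trans Tlb; exact: mulr_gt0.
have S0 : 0 < S by apply: lt_le_trans Slb; exact: mulr_gt0.
have hTS : T <= eta * S.
  apply: (le_trans Tub); rewrite -/tM erho.
  have : #|D|%:R * (rho * tm) <= r%:R * rho * tm.
    by rewrite mulrA ler_pM2r // ler_pM2r //; lra.
  have : r%:R * rho * tm <= eta * n%:R * tm by rewrite ler_pM2r // mulrC.
  have : eta * (n%:R * tm) <= eta * S by rewrite ler_pM2l.
  rewrite !mulrA; lra.
have htM : tM <= eta * S.
  have r1 : 1 <= (r%:R : R) by rewrite ler1n.
  have h : rho <= eta * n%:R by nra.
  rewrite erho; have : eta * n%:R * tm <= eta * S by rewrite -mulrA ler_pM2l.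
  have : rho * tm <= eta * n%:R * tm by rewrite ler_pM2r.
  lra.
split => //.
- have := sq_ub [set: 'I_n]; rewrite -/S => h.
  apply: le_trans h _; rewrite expr2 mulrA ler_pM2r //.
- have := sq_ub D; rewrite -/T => h.
  apply: le_trans h _; rewrite expr2 mulrA ler_pM2r // -/tM erho.
  have : rho * tm <= eta * #|D|%:R * tm by rewrite ler_pM2r.
  have : eta * (#|D|%:R * tm) <= eta * T by rewrite ler_pM2l.
  rewrite !mulrA; lra.
Qed.

End A3.

Local Open Scope classical_set_scope.
Local Open Scope ring_scope.

Lemma main_gen (R : realType)
  (theta : forall n, 'I_n -> R)
  (r : nat -> nat)
  (Dcol : forall n, graph n -> {set {set 'I_n}})
  (q : forall n, 'I_n -> 'I_n -> R)
  (Htheta : forall n (i : 'I_n), 0 < theta n i < 1)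
  (HA3 : forall eps : R, 0 < eps -> \forall n \near \oo,
     (theta_max (theta n) / theta_min (theta n)) ^+ 2
       <= eps * Num.min ((r n)%:R `^ (2 / 3))
                        ((n%:R / (r n)%:R) * theta_min (theta n) ^+ 2))
  (HD : forall n (g : graph n) (D : {set 'I_n}), D \in Dcol n g ->
     ((r n)%:R : R) `^ (3^-1) <= #|D|%:R /\ (#|D| <= r n)%N)
  (hq : forall n (i j : 'I_n), (i < j)%N -> 0 <= q n i j <= 1) :
   cvg_in_prob q
      (fun n g => eD (R:=R) g [set: 'I_n] / Ex (p0 (theta n)) (fun g' => eD (R:=R) g' [set: 'I_n])) 1 ->
    cvg_in_prob q
      (fun n g => supD (Dcol n g) (fun D =>
         `|eDc (R:=R) g D / Ex (p0 (theta n)) (fun g' => eDc (R:=R) g' D) - 1|)) 0 ->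
   cvg_in_prob q
      (fun n g => supD (Dcol n g) (fun D =>
         `|Ehat (R:=R) g D / Ex (p0 (theta n)) (fun g' => eD (R:=R) g' D) - 1|)) 0.
Proof.
move=> H1 H2 eps e0.
set e' := Num.min eps 1.
have e'0 : 0 < e' by rewrite /e' lt_min e0 ltr01.
have e'1 : e' <= 1 by rewrite /e' ge_min lexx orbT.
have e'e : e' <= eps by rewrite /e' ge_min lexx.
set d := e' / 20.
have d0 : 0 < d by rewrite /d divr_gt0.
have d1 : d <= 1 / 20 by rewrite /d ler_pM2r.
have d1' : d <= 1 by lra.
have hde : 20 * d <= eps by rewrite /d mulrC divfK.
have P1 := H1 d d0; have P2 := H2 d d0.
have hA := HA3 (d ^+ 2) (exprn_gt0 2 d0).
apply: (@squeeze_cvgr _ _ _ R (fun _ => 0) (fun n =>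
   Prob (q n) (fun g => d < `|eD (R:=R) g [set: 'I_n] / Ex (p0 (theta n)) (fun g' => eD (R:=R) g' [set: 'I_n]) - 1|)
 + Prob (q n) (fun g => d < `|supD (Dcol n g) (fun D =>
         `|eDc (R:=R) g D / Ex (p0 (theta n)) (fun g' => eDc (R:=R) g' D) - 1|) - 0|))).
- apply: filterS2 hA (nbhs_infty_gt 0) => n hAn n0.
  apply/andP; split; first exact: (@Prob_ge0 R n (q n) (hq n)).
  apply: (@Prob_sub R n (q n) (hq n)) => g /=.
  apply: contraTT; rewrite negb_or -!leNgt => /andP [hx hs].
  rewrite subr0 ger0_norm; last exact: bigmax_ge_id.
  rewrite /supD; apply: bigmax_le; first exact: ltW.
  move=> D hD; have [hD1 hD2] := HD n g D hD.
  have [T0 S0 QS TS QDT] := @A3_cons R n (theta n) (Htheta n) (r n) d n0 d0 d1' hAn D hD1 hD2.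
  set th := theta n in T0 S0 QS TS QDT *.
  have eS : \sum_(i in [set: 'I_n]%SET) th i = \sum_i th i by apply: eq_bigl => i; rewrite inE.
  have eQ : \sum_(i in [set: 'I_n]%SET) th i ^+ 2 = \sum_i th i ^+ 2 by apply: eq_bigl => i; rewrite inE.
  have ea : 2 * Ex (p0 th) (fun g' => eD (R:=R) g' [set: 'I_n]) = (\sum_i th i) ^+ 2 - \sum_i th i ^+ 2.
    by rewrite Ex_eD pairs_sum eS eQ.
  have ec : 2 * Ex (p0 th) (fun g' => eD (R:=R) g' D) = (\sum_(i in D) th i) ^+ 2 - \sum_(i in D) th i ^+ 2.
    by rewrite Ex_eD pairs_sum.
  have eb : Ex (p0 th) (fun g' => eDc (R:=R) g' D) = (\sum_(i in D) th i) * (\sum_i th i - \sum_(i in D) th i).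
    rewrite Ex_eDc; congr (_ * _).
    have hsum : \sum_i th i = \sum_(i in D) th i + \sum_(j in ~: D) th j.
      by rewrite (bigID (fun i => i \in D)) /=; congr (_ + _); apply: eq_bigl => j; rewrite inE.
    by rewrite hsum; lra.
  have hy : `|eDc (R:=R) g D / Ex (p0 th) (fun g' => eDc (R:=R) g' D) - 1| <= d.
    apply: le_trans hs; rewrite subr0; apply: le_trans (ler_norm _).
    exact: (le_bigmax_cond _ (P := fun D => D \in Dcol n g)).
  have := @core R _ _ _ _ _ _ _ _ _ _ d0 d1 T0 S0 (sumr_ge0 _ (fun i _ => sqr_ge0 (th i))) QS TS (@sq_ge0 R n th D) QDT ea eb ec hx hy.
  by rewrite /Ehat => h; apply: le_trans h hde.
- have hc := @cvg_cst R^o 0 nat \oo _; exact: hc.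
- have := cvgD P1 P2; rewrite addr0 => h; exact: h.
Qed.

Theorem lemma2 (R : realType)
  (theta : forall n, 'I_n -> R)
  (r : nat -> nat)
  (rho : forall n, {set 'I_n} -> R)
  (Dcol : forall n, graph n -> {set {set 'I_n}})
  (* rank-1 setting *)
  (Htheta : forall n (i : 'I_n), 0 < theta n i < 1)
  (Hrho : forall n (C : {set 'I_n}), #|C| = r n ->
     1 < rho n C /\
     (forall i j : 'I_n, i \in C -> j \in C -> i != j ->
        rho n C * (theta n i * theta n j) <= 1))
  (* Assumption 3: (theta_max/theta_min)^2 = o(r^{2/3} /\ (n/r) theta_min^2) *)
  (HA3 : forall eps : R, 0 < eps -> \forall n \near \oo,
     (theta_max (theta n) / theta_min (theta n)) ^+ 2
       <= eps * Num.min ((r n)%:R `^ (2 / 3))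
                        ((n%:R / (r n)%:R) * theta_min (theta n) ^+ 2))
  (* r^{1/3} <= |D| <= r for all D in the (random) collection *)
  (HD : forall n (g : graph n) (D : {set 'I_n}), D \in Dcol n g ->
     ((r n)%:R : R) `^ (3^-1) <= #|D|%:R /\ (#|D| <= r n)%N) :
  (* statement under P_0 *)
  ((cvg_in_prob (fun n => p0 (theta n))
      (fun n g => eD (R:=R) g [set: 'I_n] / Ex (p0 (theta n)) (fun g' => eD (R:=R) g' [set: 'I_n])) 1 /\
    cvg_in_prob (fun n => p0 (theta n))
      (fun n g => supD (Dcol n g) (fun D =>
         `|eDc (R:=R) g D / Ex (p0 (theta n)) (fun g' => eDc (R:=R) g' D) - 1|)) 0) ->
   cvg_in_prob (fun n => p0 (theta n))
      (fun n g => supD (Dcol n g) (fun D =>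
         `|Ehat (R:=R) g D / Ex (p0 (theta n)) (fun g' => eD (R:=R) g' D) - 1|)) 0)
  /\
  (* statement under P_C, for any sequence of communities C with |C| = r *)
  (forall C : forall n, {set 'I_n}, (forall n, #|C n| = r n) ->
   let q := fun n => pC (theta n) (rho n (C n)) (C n) in
   (cvg_in_prob q
      (fun n g => eD (R:=R) g [set: 'I_n] / Ex (p0 (theta n)) (fun g' => eD (R:=R) g' [set: 'I_n])) 1 /\
    cvg_in_prob q
      (fun n g => supD (Dcol n g) (fun D =>
         `|eDc (R:=R) g D / Ex (p0 (theta n)) (fun g' => eDc (R:=R) g' D) - 1|)) 0) ->
   cvg_in_prob q
      (fun n g => supD (Dcol n g) (fun D =>
         `|Ehat (R:=R) g D / Ex (p0 (theta n)) (fun g' => eD (R:=R) g' D) - 1|)) 0).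
Proof.
split.
- case=> H1 H2; apply: (@main_gen R theta r Dcol (fun n => p0 (theta n))) => //.
  by move=> n i j h; exact: (@p0_01 R n (theta n) (Htheta n) i j h).
- move=> C hC q [H1 H2]; apply: (@main_gen R theta r Dcol q) => //.
  move=> n i j h; rewrite /q /pC.
  have [hr1 hr2] := Hrho n (C n) (hC n).
  have t01 := @p0_01 R n (theta n) (Htheta n) i j h; rewrite /p0 in t01.
  case: ifP => // /andP [hi hj].
  case/andP: t01 => t0 t1; apply/andP; split.
    by apply: mulr_ge0 => //; apply: ltW; apply: lt_trans hr1.
  by apply: hr2 => //; rewrite neq_ltn h.
Qed.
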